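(* Let $m>1$ be a multiperfect number, i.e. $m\mid\sigma(m)$. Write $m=\prod_{i=1}^{s} p_i^{e_i}$ with distinct primes $p_i$ and exponents $e_i\ge 1$, and let $L=\operatorname{lcm}(e_1+1,\dots,e_s+1)$. If $L$ is prime, then $m=6$.
   Context: $\sigma(n)=\sum_{d\mid n} d$ denotes the sum-of-divisors function. *)

(* Defs.v *)
From mathcomp Require Import all_boot.

Definition sigma (n : nat) : nat := \sum_(d <- divisors n) d.

Definition lcm_exp_succ (m : nat) : nat :=
  \big[lcmn/1]_(p <- primes m) (logn p m).+1.

(* Main.v *)
Require Import Defs.
From mathcomp Require Import all_boot cyclic zify.

Definition F (p e : nat) := \sum_(j < e.+1) p ^ j.

Lemma FS p e : F p e.+1 = 1 + p * F p e.
Proof.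
rewrite /F big_ord_recl expn0 big_distrr /=; congr (_ + _).
by apply: eq_bigr => i _; rewrite expnS.
Qed.

Lemma sum_add_divisors p e divs :
  \sum_(d <- PrimeDecompAux.add_divisors (p, e) divs) d = F p e * \sum_(d <- divs) d.
Proof.
rewrite /PrimeDecompAux.add_divisors; elim: e => [|e IH]; first by rewrite /F big_ord1 mul1n.
rewrite iterS /=; set T := iter _ _ _.
rewrite (perm_big ([seq NatTrec.mul p i | i <- T] ++ divs)); last by rewrite perm_merge.
rewrite big_cat /= big_map.
rewrite FS mulnDl mul1n addnC; congr (_ + _).
rewrite -mulnA -IH big_distrr /=; apply: eq_bigr => i _; by rewrite natTrecE.
Qed.

Lemma sum_foldr (f : nat -> nat) s :
  \sum_(d <- foldr PrimeDecompAux.add_divisors [:: 1] [seq (p, f p) | p <- s]) d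
  = \prod_(p <- s) F p (f p).
Proof.
elim: s => [|p s IH]; first by rewrite /= big_seq1 big_nil.
by rewrite /= big_cons sum_add_divisors IH.
Qed.

Lemma sigmaE n : sigma n = \prod_(p <- primes n) F p (logn p n).
Proof. by rewrite /sigma /divisors prime_decompE sum_foldr. Qed.
Lemma F_mod x e r : x %% r = 1 -> F x e = e.+1 %[mod r].
Proof.
move=> hx; rewrite /F -modn_summ.
rewrite (eq_bigr (fun _ => 1 %% r)); last by move=> i _; rewrite -modnXm hx exp1n.
by rewrite sum_nat_const card_ord modnMmr muln1.
Qed.

Lemma F_geom y e : y * F y.+1 e + 1 = y.+1 ^ e.+1.
Proof.
elim: e => [|e IH]; first by rewrite /F big_ord1 expn0 expn1; lia.
rewrite FS expnS -IH; lia.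
Qed.

Lemma OL x r q : prime r -> prime q -> r %| F x q.-1 -> r = q \/ q %| r.-1.
Proof.
move=> pr pq hd.
have r1 := prime_gt1 pr; have q1 := prime_gt1 pq.
have nrx : ~~ (r %| x).
  apply/negP => rx; move: hd; rewrite -(prednK (n:=q.-1)); last by lia.
  rewrite FS dvdn_addl ?dvdn_mulr // dvdn1 => /eqP; lia.
have cx : coprime x r by rewrite coprime_sym prime_coprime.
have h2 : x ^ r.-1 %% r = 1.
  by rewrite -(totient_prime pr) Euler_exp_totient // modn_small.
case: x nrx cx h2 hd => [|y] nrx cx h2 hd; first by rewrite dvdn0 in nrx.
have h1 : y.+1 ^ q %% r = 1.
  rewrite -(prednK (ltnW q1)) -F_geom -modnDml.
  by move/dvdnP: hd => [c ->]; rewrite mulnA modnMl add0n modn_small.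
have [qd|nqd] := boolP (q %| r.-1); first by right.
left.
have cq : coprime q r.-1 by rewrite prime_coprime.
case: (egcdnP r.-1 (prime_gt0 pq)) => km kn Ekm _.
move: cq; rewrite /coprime => /eqP cq; rewrite cq in Ekm.
have hx : y.+1 %% r = 1.
  have : y.+1 ^ (km * q) %% r = 1 by rewrite mulnC expnM -modnXm h1 exp1n modn_small.
  by rewrite Ekm expnD expn1 (mulnC kn) expnM -modnMml -modnXm h2 exp1n (modn_small r1) mul1n.
have := @F_mod _ q.-1 _ hx; rewrite (prednK (ltnW q1)).
move/dvdnP: hd => [c ->]; rewrite modnMl => /esym/eqP.
rewrite -/(r %| q) dvdn_prime2 // => /eqP //.
Qed.
Lemma L1 (f : nat -> nat) s x : x \in s -> f x %| \big[lcmn/1]_(y <- s) f y.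
Proof.
elim: s => // y s IH; rewrite inE big_cons => /orP[/eqP->|/IH h].
  exact: dvdn_lcml.
exact: dvdn_trans h (dvdn_lcmr _ _).
Qed.

Lemma L2 (f : nat -> nat) s d : (forall x, x \in s -> d %| f x) ->
  d ^ size s %| \prod_(x <- s) f x.
Proof.
elim: s => [|y s IH] h; first by rewrite big_nil.
rewrite big_cons /= expnS dvdn_mul ?h ?inE ?eqxx //.
by apply: IH => x hx; apply: h; rewrite inE hx orbT.
Qed.

Lemma L3 (a b : nat -> nat) s : s != [::] -> (forall x, x \in s -> a x < b x) ->
  \prod_(x <- s) a x < \prod_(x <- s) b x.
Proof.
elim: s => [|y s IH] // _ h; rewrite !big_cons.
have hy : a y < b y by apply: h; rewrite inE eqxx.
have hs : forall x, x \in s -> a x < b x by move=> x hx; apply: h; rewrite inE hx orbT.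
have le : \prod_(x <- s) a x <= \prod_(x <- s) b x.
  rewrite big_seq_cond [X in _ <= X]big_seq_cond; apply: leq_prod => x /andP[hx _].
  exact: ltnW (hs x hx).
have pos : 0 < \prod_(x <- s) b x.
  rewrite big_seq_cond prodn_cond_gt0 // => x /andP[hx _]; have := hs x hx; lia.
nia.
Qed.

Lemma L4 s q : 1 < q -> (forall x, x \in s -> 1 < x) ->
  \prod_(x <- s) x <= q ^ size s * \prod_(x <- s) x.-1.
Proof.
move=> q1; elim: s => [|y s IH] h; first by rewrite !big_nil.
rewrite !big_cons /= expnS.
have hy : 1 < y by apply: h; rewrite inE eqxx.
have hs' : forall x, x \in s -> 1 < x by move=> x hx; apply: h; rewrite inE hx orbT.
have := IH hs'.
set A := \prod_(x <- s) x; set B := \prod_(x <- s) x.-1; set Q := q ^ size s.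
move=> hA.
have : y <= q * y.-1 by nia.
nia.
Qed.

Lemma L5 s c : (forall x, x \in s -> c <= x) -> size s <= c ->
  (c - size s) * \prod_(x <- s) x <= c * \prod_(x <- s) x.-1.
Proof.
elim: s => [|y s IH] h hs; first by rewrite !big_nil subn0.
rewrite !big_cons /=.
have hy : c <= y by apply: h; rewrite inE eqxx.
have hs' : forall x, x \in s -> c <= x by move=> x hx; apply: h; rewrite inE hx orbT.
have := IH hs' (ltnW hs).
set A := \prod_(x <- s) x; set B := \prod_(x <- s) x.-1.
move=> hA.
have : (c - (size s).+1) * y <= (c - size s) * y.-1.
  move: hs; rewrite /=; set n := size s; move=> hs.
  have -> : c - n = (c - n.+1).+1 by lia.
  set d := c - n.+1. have : d.+1 <= y by lia. nia.
move=> h2.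
have h3 : (c - (size s).+1) * (y * A) <= (c - size s) * y.-1 * A.
  rewrite mulnA; exact: leq_mul h2 (leqnn _).
apply: leq_trans h3 _.
set D := c - size s; set Y := y.-1.
have := leq_mul (leqnn Y) hA; rewrite !mulnA [Y * D]mulnC [Y * c]mulnC -!mulnA [Y * A]mulnC [Y * B]mulnC !mulnA //.
Qed.

Lemma F_ge p e : p ^ e <= F p e.
Proof.
elim: e => [|e IH]; first by rewrite /F big_ord1.
rewrite FS expnS; nia.
Qed.

Lemma F_gt p e : p ^ e.+1 < F p e.+1.
Proof. rewrite FS expnS; have := F_ge p e; nia. Qed.

Lemma F_lt p e : 0 < p -> F p e * p.-1 < p ^ e * p.
Proof.
case: p => // y _; have := F_geom y e; rewrite expnS /=; nia.
Qed.

Lemma dvd_prod_has (s : seq nat) (f : nat -> nat) r : prime r ->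
  r %| \prod_(x <- s) f x -> exists2 x, x \in s & r %| f x.
Proof.
move=> pr; rewrite Euclid_dvd_prod // big_has => /hasP[x hx h]; by exists x.
Qed.

Theorem mainTheorem2 (m : nat) :
  1 < m -> m %| sigma m -> prime (lcm_exp_succ m) -> m = 6.
Proof.
move=> m1 hdiv; rewrite /lcm_exp_succ; set q := \big[lcmn/1]_(p <- _) _ => pq.
have m0 : 0 < m by lia.
set P := primes m.
have q1 := prime_gt1 pq.
have hq : forall p, p \in P -> logn p m = q.-1.
  move=> p hp; have hd : (logn p m).+1 %| q := @L1 (fun p => (logn p m).+1) _ _ hp.
  have h0 : 0 < logn p m by rewrite logn_gt0.
  have hn : (logn p m).+1 != 1 by rewrite eqSS -lt0n.
  by move/(prime_nt_dvdP pq hn): hd => <-.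
have Em : m = \prod_(p <- P) p ^ q.-1.
  rewrite {1}(prod_prime_decomp m0) prime_decompE big_map.
  by apply: eq_big_seq => p hp /=; rewrite hq.
have Es : sigma m = \prod_(p <- P) F p q.-1.
  by rewrite sigmaE; apply: eq_big_seq => p hp /=; rewrite hq.
have Pne : P != [::] by rewrite /P primes_eq0 -leqNgt.
have primeP : forall p, p \in P -> prime p by move=> p; rewrite mem_primes => /andP[].
have divP : forall r, r \in P -> exists2 p, p \in P & r %| F p q.-1.
  move=> r hr; apply: dvd_prod_has; first exact: primeP.
  rewrite -Es; apply: dvdn_trans hdiv; by move: hr; rewrite mem_primes => /and3P[].
have F1 : forall p, F p 1 = p.+1 by move=> p; rewrite FS /F big_ord1 expn0 muln1 add1n.
have [q2|q2] := eqVneq q 2.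
  set M := max_pdiv m.
  have pM : prime M := max_pdiv_prime m1.
  have MP : M \in P by rewrite mem_primes pM m0 max_pdiv_dvd.
  have [p hp hM] := divP M MP.
  rewrite q2 /= F1 in hM.
  have pp := primeP p hp.
  have pleM : p <= M by apply: max_pdiv_max.
  have Mle : M <= p.+1 by apply: dvdn_leq.
  have eM : M = p.+1.
    case: (eqVneq M p) => [e|ne]; last by lia.
    move: hM; rewrite e -addn1 dvdn_addr ?dvdnn // dvdn1 => /eqP p1.
    by rewrite p1 in pp.
  have p2 : p = 2.
    case: (even_prime pp) => // op.
    case: (even_prime pM) => [|]; rewrite eM; first by move=> [] e; rewrite e in pp.
    by rewrite /= op.
  have hmem : forall r, (r \in P) = (r \in [:: 2; 3]).
    move=> r; apply/idP/idP.
      move=> hr; have := prime_gt1 (primeP r hr).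
      have : r <= M by apply: max_pdiv_max.
      rewrite eM p2 !inE => h1 h2; apply/orP; lia.
    rewrite !inE => /orP[/eqP->|/eqP->]; first by rewrite -p2.
    by rewrite -[3]/(2.+1) -p2 -eM.
  have perm : perm_eq P [:: 2; 3] by apply: uniq_perm; rewrite ?primes_uniq.
  by rewrite Em (perm_big _ perm) q2 /= !big_cons big_nil.
have q3 : 2 < q by move: q2 q1; lia.
have C1 : forall r, r \in P -> r = q \/ q %| r.-1.
  move=> r hr; have [p hp h] := divP r hr; exact: OL (primeP r hr) pq h.
have oq : odd q by case: (even_prime pq) => // e; rewrite e in q2.
have C3 : forall r, r \in P -> r != q -> (2 * q).+1 <= r.
  move=> r hr rq; have pr := primeP r hr.
  case: (C1 r hr) => [e|hd]; first by rewrite e eqxx in rq.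
  have r2 : r != 2.
    apply/eqP => e; rewrite e /= dvdn1 in hd; by rewrite (eqP hd) in q1.
  have or : odd r by case: (even_prime pr) => // e; rewrite e in r2.
  have h2 : 2 %| r.-1.
    have := or; rewrite -(prednK (prime_gt0 pr)) /= => h; by rewrite dvdn2.
  have : 2 * q %| r.-1 by rewrite Gauss_dvd ?coprime2n // h2 hd.
  have r1 := prime_gt1 pr.
  move/dvdn_leq => h; have := h ltac:(lia); lia.
have C2 : forall r, r \in P -> r != q -> q %| F r q.-1.
  move=> r hr rq; have pr := primeP r hr.
  case: (C1 r hr) => [e|hd]; first by rewrite e eqxx in rq.
  have hrq : r %% q = 1.
    move/dvdnP: hd => [c hc].
    by rewrite -(prednK (prime_gt0 pr)) hc -addn1 modnMDl modn_small.
  have := @F_mod _ q.-1 _ hrq; rewrite (prednK (prime_gt0 pq)) modnn.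
  by move/eqP; rewrite -/(dvdn _ _).
move/dvdnP: hdiv => [k Ek].
have hineq : k * \prod_(p <- P) p.-1 < \prod_(p <- P) p.
  have h := @L3 (fun p => F p q.-1 * p.-1) (fun p => p ^ q.-1 * p) P Pne
    (fun x hx => @F_lt x q.-1 (prime_gt0 (primeP x hx))).
  rewrite !big_split /= -Es -Em Ek in h.
  by rewrite [k * m]mulnC -mulnA ltn_pmul2l in h.
have kodd : odd k.
  case ok : (odd k) => //.
  have h2 : 2 %| sigma m by rewrite Ek dvdn_mulr // dvdn2 ok.
  rewrite Es in h2; have [p hp hp2] := dvd_prod_has _ _ 2 isT h2.
  case: (@OL p 2 q isT pq hp2) => [e|]; first by rewrite -e in q2.
  by rewrite dvdn1 => /eqP e; rewrite e in q1.
have k1 : 1 < k.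
  have eq : q.-1 = (q.-2).+1 by lia.
  have hlt := @L3 (fun p => p ^ q.-1) (fun p => F p q.-1) P Pne
    (fun x _ => ltac:(rewrite eq; exact: F_gt)).
  rewrite -Es -Em Ek in hlt.
  by rewrite -{1}[m]mul1n ltn_pmul2r in hlt.
have k3 : 2 < k by move: kodd k1; case: (k) => [|[|[|]]].
have primeP1 : forall x, x \in P -> 1 < x by move=> x hx; exact: prime_gt1 (primeP x hx).
have [qP|qP] := boolP (q \in P); last first.
  have hall : forall r, r \in P -> q %| F r q.-1.
    move=> r hr; apply: C2 => //; apply/eqP => e; by rewrite -e hr in qP.
  have hd := @L2 (fun r => F r q.-1) P q hall; rewrite -Es Ek in hd.
  have cq : coprime (q ^ size P) m.
    rewrite coprimeXl // prime_coprime //; apply/negP => qm.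
    by rewrite mem_primes pq m0 qm in qP.
  rewrite Gauss_dvdl // in hd.
  have h1 := dvdn_leq (ltnW (ltnW k3)) hd.
  have h2 := @L4 P q q1 primeP1.
  have h3 := leq_mul h1 (leqnn (\prod_(p <- P) p.-1)).
  by have := leq_ltn_trans (leq_trans h2 h3) hineq; rewrite ltnn.
set P' := rem q P.
have memP' : forall r, (r \in P') = (r != q) && (r \in P).
  by move=> r; rewrite (mem_rem_uniq _ (primes_uniq m)) inE.
have bigr : forall f : nat -> nat, \prod_(p <- P) f p = f q * \prod_(p <- P') f p.
  by move=> f; rewrite (big_rem _ qP).
set n := size P'.
have ge : forall r, r \in P' -> 2 * q <= r.
  move=> r; rewrite memP' => /andP[rq hr]; have := C3 r hr rq; lia.
have d1 : q ^ n %| \prod_(p <- P') F p q.-1.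
  apply: L2 => r; rewrite memP' => /andP[rq hr]; exact: C2.
set m' := \prod_(p <- P') p ^ q.-1.
have Em' : m = q ^ q.-1 * m' by rewrite Em bigr.
have cq : coprime q m'.
  rewrite prime_coprime //; apply/negP => /(dvd_prod_has _ _ _ pq) [x hx].
  rewrite Euclid_dvdX // => /andP[hqx _].
  move: hx; rewrite memP' => /andP[xq hx].
  by move: hqx; rewrite dvdn_prime2 // ?(primeP x hx) // eq_sym (negbTE xq).
have hd : q ^ n %| k * q ^ q.-1.
  have : q ^ n %| sigma m by rewrite Es bigr dvdn_mull.
  rewrite Ek Em' mulnA Gauss_dvdl //; exact: coprimeXl.
move: hineq; rewrite (bigr predn) (bigr id) /=.
set A := \prod_(p <- P') p.-1; set B := \prod_(p <- P') p => hineq.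
have P'1 : forall x, x \in P' -> 1 < x.
  move=> x hx; have := ge x hx; lia.
have [nle|nge] := leqP n q.-1.
  have h := @L5 P' (2 * q) ge ltac:(rewrite -/n; lia).
  rewrite -/n -/A -/B in h.
  have h4 : (q.+1) * B <= 2 * q * A.
    apply: leq_trans h; apply: leq_mul => //; lia.
  have s1 : 3 * (q.-1 * A) * q.+1 <= k * (q.-1 * A) * q.+1.
    by apply: leq_mul => //; apply: leq_mul.
  have s2 : k * (q.-1 * A) * q.+1 < q * B * q.+1 by rewrite ltn_pmul2r.
  have s3 : q * B * q.+1 <= q * (2 * q * A) by rewrite -mulnA [B * _]mulnC leq_mul2l h4 orbT.
  have s4 := leq_ltn_trans s1 (leq_trans s2 s3).
  have e1 : 3 * (q.-1 * A) * q.+1 = (3 * q.-1 * q.+1) * A by rewrite mulnA mulnAC.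
  have e2 : q * (2 * q * A) = (2 * q * q) * A by rewrite mulnA [q * (2 * q)]mulnC.
  move: s4; rewrite e1 e2 ltn_mul2r => /andP[_] s4.
  move: s4; rewrite -(prednK (ltnW q1)) /=; set u := q.-1; move=> s4. 
  have : 2 <= u by lia.
  nia.
have en : n = q.-1 + (n - q.-1) by lia.
move: hd; rewrite en expnD [k * _]mulnC dvdn_pmul2l ?expn_gt0 ?prime_gt0 // => hd.
have hk := dvdn_leq (ltnW (ltnW k3)) hd.
have en2 : n - q.-1 = (n - q).+1 by lia.
rewrite en2 expnS in hk.
have hsplit : forall f : nat -> nat, \prod_(p <- P') f p =
    \prod_(p <- take q P') f p * \prod_(p <- drop q P') f p.
  by move=> f; rewrite -big_cat cat_take_drop.
move: hineq; rewrite /A /B !hsplit.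
set A1 := \prod_(p <- take q P') p.-1; set A2 := \prod_(p <- drop q P') p.-1.
set B1 := \prod_(p <- take q P') p; set B2 := \prod_(p <- drop q P') p => hineq.
have sz : size (take q P') = q by rewrite size_take -/n; case: ltnP => //; lia.
have h5 : B1 <= 2 * A1.
  have := @L5 (take q P') (2 * q) (fun x hx => ge x (mem_take hx)) ltac:(rewrite sz; lia).
  rewrite sz -/A1 -/B1 => h. 
  have e2 : 2 * q - q = q by lia.
  rewrite e2 [2 * q]mulnC -mulnA leq_pmul2l in h; [exact: h | lia].
have h6 : B2 <= q ^ (n - q) * A2.
  have := @L4 (drop q P') q q1 (fun x hx => P'1 x (mem_drop hx)).
  by rewrite size_drop.
set Q := q ^ (n - q) in hk h6.
have t1 : q * Q * (q.-1 * (A1 * A2)) <= k * (q.-1 * (A1 * A2)) by apply: leq_mul.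
have t2 : q * (B1 * B2) <= q * ((2 * A1) * (Q * A2)) by rewrite leq_mul2l leq_mul ?orbT.
have t3 := leq_ltn_trans t1 (leq_trans hineq t2).
have e1 : q * Q * (q.-1 * (A1 * A2)) = q.-1 * (q * Q * A1 * A2).
  by rewrite mulnCA !mulnA.
have e2 : q * (2 * A1 * (Q * A2)) = 2 * (q * Q * A1 * A2).
  by rewrite !mulnA; congr (_ * _); rewrite [q * 2]mulnC mulnAC.
move: t3; rewrite e1 e2 ltn_mul2r => /andP[_] t3.
lia.
Qed.
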